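(* Let $\mathcal{S}$ be a finite set of locations forming a rectangular grid, identified with a set of integer lattice points $\mathcal{S}\subseteq\mathbb{Z}^2$ (grid cells of unit side length), and let $d_E$ denote the Euclidean distance on $\mathbb{R}^2$. Let $\mathcal{G}_1=(\mathcal{S},\mathcal{E}_1)$ be the location policy graph in which each location $\textbf{s}\in\mathcal{S}$ is joined by an edge to each of its (up to) eight closest grid locations, i.e. $\{\textbf{s},\textbf{s}'\}\in\mathcal{E}_1$ iff $\textbf{s}\neq\textbf{s}'$ and $\max(|s_x-s'_x|,|s_y-s'_y|)=1$. Let $\epsilon>0$. If a randomized algorithm $\mathcal{A}$ with input in $\mathcal{S}$ satisfies $\{\epsilon,\mathcal{G}_1\}$-location privacy, then $\mathcal{A}$ satisfies $\epsilon$-Geo-Indistinguishability, i.e. for all $\textbf{s}_i,\textbf{s}_j\in\mathcal{S}$ and every set $Z$ of outputs, $\Pr(\mathcal{A}(\textbf{s}_i)\in Z)\leq e^{\epsilon\, d_E(\textbf{s}_i,\textbf{s}_j)}\Pr(\mathcal{A}(\textbf{s}_j)\in Z)$.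
   Context: A location policy graph is an undirected graph $\mathcal{G}=(\mathcal{S},\mathcal{E})$ whose nodes $\mathcal{S}$ are the possible locations and whose edges $\mathcal{E}$ indicate pairs of locations that must be indistinguishable. Two locations joined by an edge are called 1-neighbors. A randomized algorithm $\mathcal{A}$ taking a location as input satisfies $\{\epsilon,\mathcal{G}\}$-location privacy iff for every set $Z$ of possible outputs and every pair of 1-neighbors $\textbf{s},\textbf{s}'$ in $\mathcal{G}$, $\Pr(\mathcal{A}(\textbf{s})\in Z)\leq e^{\epsilon}\Pr(\mathcal{A}(\textbf{s}')\in Z)$. An algorithm satisfies $\epsilon$-Geo-Indistinguishability iff for all locations $\textbf{s}_i,\textbf{s}_j$ and all output sets $Z$, $\Pr(\mathcal{A}(\textbf{s}_i)\in Z)\leq e^{\epsilon d_E(\textbf{s}_i,\textbf{s}_j)}\Pr(\mathcal{A}(\textbf{s}_j)\in Z)$, where $d_E$ is Euclidean distance. *)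

(* Defs.v *)
From HB Require Import structures.
From mathcomp Require Import all_boot all_order all_algebra.
From mathcomp Require Import all_classical all_reals all_analysis.
Set Implicit Arguments. Unset Strict Implicit. Unset Printing Implicit Defensive.
Import Order.TTheory GRing.Theory Num.Theory.
Local Open Scope ring_scope.
Local Open Scope classical_set_scope.

Definition loc := (int * int)%type.

Definition rect_grid (x0 x1 y0 y1 : int) : set loc :=
  [set s | (x0 <= s.1 <= x1) && (y0 <= s.2 <= y1)].

Definition G1_edge (s s' : loc) : bool :=
  (s != s') && (Num.max `|s.1 - s'.1| `|s.2 - s'.2| == 1).

Definition dE (R : realType) (s s' : loc) : R :=
  Num.sqrt (((s.1 - s'.1)%:~R) ^+ 2 + ((s.2 - s'.2)%:~R) ^+ 2).

(* A randomized algorithm with input in loc and outputs in a measurable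
   space T: each input is mapped to a probability distribution on T. *)

Definition location_privacy (R : realType) (d : measure_display)
  (T : measurableType d) (eps : R) (S : set loc) (G : loc -> loc -> bool)
  (A : loc -> probability T R) : Prop :=
  forall s s', S s -> S s' -> G s s' ->
  forall Z : set T, measurable Z ->
    (A s Z <= (expR eps)%:E * A s' Z)%E.

Definition geo_ind (R : realType) (d : measure_display)
  (T : measurableType d) (eps : R) (S : set loc)
  (A : loc -> probability T R) : Prop :=
  forall si sj, S si -> S sj ->
  forall Z : set T, measurable Z ->
    (A si Z <= (expR (eps * dE R si sj))%:E * A sj Z)%E.

(* Main.v *)
Require Import Defs.
From HB Require Import structures.
From mathcomp Require Import all_boot all_order all_algebra.
From mathcomp Require Import all_classical all_reals all_analysis.
From mathcomp Require Import zify.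
Import Order.TTheory GRing.Theory Num.Theory.
Local Open Scope ring_scope.

Definition stp (a b : int) : int := if a < b then a + 1 else if b < a then a - 1 else a.

Lemma stp_spec (a b : int) :
  (stp a b = a + 1 /\ a < b) \/ (stp a b = a - 1 /\ b < a) \/ (stp a b = a /\ a = b).
Proof.
rewrite /stp; case: ifP => h1; first by left.
case: ifP => h2; first by right; left.
right; right; split => //; lia.
Qed.

Lemma absz_le_sqrt (R : realType) (a b : int) :
  ((absz a)%:R : R) <= Num.sqrt ((a%:~R) ^+ 2 + (b%:~R) ^+ 2).
Proof.
rewrite natr_absz intr_norm -sqrtr_sqr.
apply: ler_wsqrtr; rewrite lerDl; exact: sqr_ge0.
Qed.

Lemma absz_le_sqrt' (R : realType) (a b : int) :
  ((absz b)%:R : R) <= Num.sqrt ((a%:~R) ^+ 2 + (b%:~R) ^+ 2).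
Proof. by rewrite addrC; apply: absz_le_sqrt. Qed.

Theorem theorem1 (R : realType) (d : measure_display) (T : measurableType d)
  (x0 x1 y0 y1 : int) (eps : R) (A : loc -> probability T R) :
  0 < eps ->
  location_privacy eps (rect_grid x0 x1 y0 y1) G1_edge A ->
  geo_ind eps (rect_grid x0 x1 y0 y1) A.
Proof.
move=> heps hp si sj hsi hsj Z mZ.
have key : forall n : nat, forall s, rect_grid x0 x1 y0 y1 s ->
    `|s.1 - sj.1| <= n%:Z -> `|s.2 - sj.2| <= n%:Z ->
    (A s Z <= (expR (eps * n%:R))%:E * A sj Z)%E.
  elim=> [|n IH] s hs h1 h2.
    have -> : s = sj by rewrite [s]surjective_pairing [sj]surjective_pairing; congr (_,_); lia.
    by rewrite mulr0 expR0 mul1e.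
  case: (eqVneq s sj) => [->|hne].
    apply: lee_pemull => //; rewrite lee_fin -expR0 ler_expR.
    by apply: mulr_ge0 => //; exact: ltW.
  set s' : loc := (stp s.1 sj.1, stp s.2 sj.2).
  move: hs hsj; rewrite /rect_grid /= => hs hsj'.
  have hs' : rect_grid x0 x1 y0 y1 s'.
    rewrite /rect_grid /s' /=.
    case: (stp_spec s.1 sj.1) => [[-> ?]|[[-> ?]|[-> ?]]];
    case: (stp_spec s.2 sj.2) => [[-> ?]|[[-> ?]|[-> ?]]]; lia.
  have he : G1_edge s s'.
    rewrite /G1_edge /s' /=.
    have hne' : (s.1 != sj.1) || (s.2 != sj.2).
      by move: hne; rewrite [s]surjective_pairing [sj]surjective_pairing xpair_eqE negb_and.
    rewrite [s in s != _]surjective_pairing xpair_eqE.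
    case: (stp_spec s.1 sj.1) => [[-> ?]|[[-> ?]|[-> ?]]];
    case: (stp_spec s.2 sj.2) => [[-> ?]|[[-> ?]|[-> ?]]]; lia.
  have h' : (A s' Z <= (expR (eps * n%:R))%:E * A sj Z)%E.
    apply: IH => //; rewrite /s' /=.
      by case: (stp_spec s.1 sj.1) => [[-> ?]|[[-> ?]|[-> ?]]]; lia.
    by case: (stp_spec s.2 sj.2) => [[-> ?]|[[-> ?]|[-> ?]]]; lia.
  apply: le_trans (hp s s' _ hs' he Z mZ) _; first by rewrite /rect_grid /=.
  have -> : eps * n.+1%:R = eps + eps * n%:R by rewrite -natr1 mulrDr mulr1 addrC.
  rewrite expRD EFinM -muleA; apply: lee_wpmul2l => //.
pose n := maxn (absz (si.1 - sj.1)) (absz (si.2 - sj.2)).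
apply: le_trans (key n si hsi _ _) _; try (rewrite /n; lia).
apply: lee_wpmul2r => //; rewrite lee_fin ler_expR; apply: ler_wpM2l; first exact: ltW.
rewrite /dE /n /maxn; case: ifP => _; first exact: absz_le_sqrt'.
exact: absz_le_sqrt.
Qed.
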